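(* Let $\mathcal{L}=(S,\Sigma,\to)$ be a pLTS in which every relevant distribution has finite support, and let $\mathcal{L}'$ be its associated standard LTS, with bisimilarity approximants $\sim'_m$. Then for every $n\in\mathbb{N}$: (i) for relevant distributions $d_1,d_2$: $d_1,d_2$ are $\sim_n$-equivalent (where $\sim_n$ is the approximant in $\mathcal{L}$) if and only if $d_1\sim'_{3n+2}d_2$ in $\mathcal{L}'$; (ii) for relevant sets $T_1,T_2$: $T_1,T_2$ are $\sim_n$-similar if and only if $T_1\sim'_{3n+1}T_2$ in $\mathcal{L}'$.
   Context: For a countable set $A$, a probability distribution on $A$ is a function $d\colon A\to[0,1]\cap\mathbb{Q}$ with $\sum_{a\in A}d(a)=1$; $\mathrm{supp}(d)=\{a\mid d(a)>0\}$; $\mathcal{D}(A)$ is the set of distributions; $d(B)=\sum_{a\in B}d(a)$; $d$ is Dirac if $d(a)=1$ for some $a$. A pLTS is $\mathcal{L}=(S,\Sigma,\to)$ with $S$ finite or countable, $\Sigma$ finite, $\to\subseteq S\times\Sigma\times\mathcal{D}(S)$ image-finite; write $s\xrightarrow{a}d$. A standard LTS is a pLTS whose distributions are all Dirac. For an equivalence $R$ on $S$, $d,d'$ are $R$-equivalent if $d(E)=d'(E)$ for every $R$-class $E$; subsets $T_1,T_2\subseteq S$ are $R$-similar if they intersect exactly the same $R$-classes. Approximants: $s\sim_0t$ always; $s\sim_{n+1}t$ iff every $s\xrightarrow{a}d$ is matched by some $t\xrightarrow{a}d'$ with $d,d'$ $\sim_n$-equivalent and vice versa. Associated LTS: $d$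 is relevant if $s\xrightarrow{a}d$ for some $s,a$; a nonempty $T\subseteq S$ is relevant if $T\subseteq\mathrm{supp}(d)$ for some relevant $d$; $\rho$ is relevant if $\rho=d(T)$ for relevant $d$ and nonempty $T\subseteq\mathrm{supp}(d)$. $\mathcal{L}'=(S',\Sigma',\Rightarrow)$ has states: $S$ plus relevant distributions plus relevant sets (disjoint union); actions: $\Sigma$ plus relevant numbers plus $\{\#\}$ (disjoint union); transitions: $s\overset{a}{\Rightarrow}d$ iff $s\xrightarrow{a}d$; $d\overset{\rho}{\Rightarrow}T$ iff $d,\rho$ relevant, $T\subseteq\mathrm{supp}(d)$, $d(T)\ge\rho$; $T\overset{\#}{\Rightarrow}s$ iff $T$ relevant and $s\in T$. *)

(* Defs.v *)
From HB Require Import structures.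
From mathcomp Require Import all_boot all_order all_algebra.
Set Implicit Arguments. Unset Strict Implicit. Unset Printing Implicit Defensive.
Import Order.TTheory GRing.Theory Num.Theory.
From Stdlib Require List.
Local Open Scope ring_scope.

(* Unordered sum of a (nonnegative) rational-valued function over the elements
   of a countable type satisfying P:  sum_on P f r  means  sum_{x | P x} f x = r,
   i.e. r is the supremum of all finite partial sums. *)
Definition sum_on {A : eqType} (P : A -> Prop) (f : A -> rat) (r : rat) : Prop :=
  (forall s : seq A, uniq s -> (forall x, x \in s -> P x) ->
      \sum_(x <- s) f x <= r) /\
  (forall eps : rat, 0 < eps -> exists s : seq A,
      [/\ uniq s, (forall x, x \in s -> P x) & r - eps < \sum_(x <- s) f x]).

Definition is_distr {A : eqType} (d : A -> rat) : Prop :=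
  (forall a, 0 <= d a <= 1) /\ sum_on (fun _ => True) d 1.

Definition supp {A : eqType} (d : A -> rat) (a : A) : Prop := 0 < d a.

Definition is_pLTS (S : countType) (Sig : finType)
    (tr : S -> Sig -> (S -> rat) -> Prop) : Prop :=
  (forall s a d, tr s a d -> is_distr d) /\
  (forall s a, exists l : seq (S -> rat), forall d, tr s a d -> List.In d l).

(* d, d' are R-equivalent: d(E) = d'(E) for every R-class E = {x | R x0 x} *)
Definition dequiv {A : eqType} (R : A -> A -> Prop) (d d' : A -> rat) : Prop :=
  forall (x0 : A) (r : rat), sum_on (R x0) d r <-> sum_on (R x0) d' r.

Definition rsimilar {A : Type} (R : A -> A -> Prop) (T1 T2 : A -> Prop) : Prop :=
  forall x0 : A, (exists x, T1 x /\ R x0 x) <-> (exists x, T2 x /\ R x0 x).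

Section PLTS.
Variables (S : countType) (Sig : finType) (tr : S -> Sig -> (S -> rat) -> Prop).

Fixpoint papprox (n : nat) : S -> S -> Prop :=
  match n with
  | 0 => fun _ _ => True
  | n'.+1 => fun s t =>
      (forall a d, tr s a d -> exists d', tr t a d' /\ dequiv (papprox n') d d') /\
      (forall a d', tr t a d' -> exists d, tr s a d /\ dequiv (papprox n') d d')
  end.

Definition rel_distr (d : S -> rat) : Prop := exists s a, tr s a d.

Definition rel_set (T : S -> Prop) : Prop :=
  (exists x, T x) /\ exists d, rel_distr d /\ (forall x, T x -> supp d x).

Definition rel_num (rho : rat) : Prop :=
  exists d (T : S -> Prop), [/\ rel_distr d, (exists x, T x),
      (forall x, T x -> supp d x) & sum_on T d rho].

Inductive lstate_raw :=
  | LS of S | LD of (S -> rat) | LT of (S -> Prop).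
Inductive lact_raw :=
  | LA of Sig | LN of rat | LH.

Definition lstate_ok (x : lstate_raw) : Prop :=
  match x with LS _ => True | LD d => rel_distr d | LT T => rel_set T end.
Definition lact_ok (b : lact_raw) : Prop :=
  match b with LA _ => True | LN rho => rel_num rho | LH => True end.

(* S' = S + relevant distributions + relevant sets;
   Sigma' = Sigma + relevant numbers + {#} *)
Definition lstate := {x : lstate_raw | lstate_ok x}.
Definition lact := {b : lact_raw | lact_ok b}.

Definition lstep_raw (x : lstate_raw) (b : lact_raw) (y : lstate_raw) : Prop :=
  match x, b, y with
  | LS s, LA a, LD d => tr s a d
  | LD d, LN rho, LT T =>
      [/\ rel_distr d, rel_num rho, (forall x, T x -> supp d x) &
          exists r, sum_on T d r /\ rho <= r]
  | LT T, LH, LS s => rel_set T /\ T s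
  | _, _, _ => False
  end.

Definition lstep (x : lstate) (b : lact) (y : lstate) : Prop :=
  lstep_raw (proj1_sig x) (proj1_sig b) (proj1_sig y).

End PLTS.

Fixpoint lapprox {X B : Type} (step : X -> B -> X -> Prop) (n : nat) : X -> X -> Prop :=
  match n with
  | 0 => fun _ _ => True
  | n'.+1 => fun x y =>
      (forall b x', step x b x' -> exists y', step y b y' /\ lapprox step n' x' y') /\
      (forall b y', step y b y' -> exists x', step x b x' /\ lapprox step n' x' y')
  end.

(* Main.v *)
Require Import Defs.
From HB Require Import structures.
From mathcomp Require Import all_boot all_order all_algebra.
From mathcomp Require Import boolp lra zify.
Set Implicit Arguments. Unset Strict Implicit. Unset Printing Implicit Defensive.
Import Order.TTheory GRing.Theory Num.Theory.
Local Open Scope ring_scope.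

Section Sums.
Variable A : eqType.
Implicit Types (d f : A -> rat) (P Q U : A -> Prop) (L : seq A).

Definition msum L d P := \sum_(x <- L | `[< P x >]) d x.

Lemma sum_on_le P f r r' : sum_on P f r -> sum_on P f r' -> r <= r'.
Proof.
move=> [_ H1] [H2 _]; rewrite leNgt; apply/negP => lt.
have e0 : 0 < r - r' by lra.
have [s [us sP hs]] := H1 _ e0.
have := H2 s us sP; lra.
Qed.

Lemma sum_on_uniq P f r r' : sum_on P f r -> sum_on P f r' -> r = r'.
Proof. by move=> a b; apply/eqP; rewrite eq_le (sum_on_le a b) (sum_on_le b a). Qed.

Lemma sum_on_msum L d P : uniq L -> (forall x, 0 <= d x) ->
  (forall x, 0 < d x -> x \in L) -> sum_on P d (msum L d P).
Proof.
move=> uL d0 dL; split.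
- move=> s us sP.
  rewrite (bigID (fun x => x \in L)) /=.
  rewrite [X in _ + X]big1 ?addr0; last first.
    move=> x /negP xL; apply/eqP; rewrite eq_le d0 andbT leNgt.
    by apply/negP => /dL.
  rewrite -big_filter.
  have pe : perm_eq [seq x <- s | true && (x \in L)] [seq x <- L | x \in s].
    apply: uniq_perm; rewrite ?filter_uniq //.
    by move=> x; rewrite !mem_filter andbC.
  rewrite (perm_big _ pe) big_filter /msum.
  rewrite big_mkcond [X in _ <= X]big_mkcond /=.
  apply: ler_sum => x _.
  case: ifP => xs; first by rewrite (asboolT (sP x xs)).
  by case: ifP.
- move=> eps e0; exists [seq x <- L | `[< P x >]]; split.
  + exact: filter_uniq.
  + by move=> x; rewrite mem_filter => /andP[/asboolP].
  + rewrite big_filter /msum; lra.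
Qed.

Lemma msum_ge0 L d P : (forall x, 0 <= d x) -> 0 <= msum L d P.
Proof. by move=> d0; apply: sumr_ge0. Qed.

Lemma msum_mono L d P Q : (forall x, 0 <= d x) -> (forall x, P x -> Q x) ->
  msum L d P <= msum L d Q.
Proof.
move=> d0 PQ; rewrite /msum big_mkcond [X in _ <= X]big_mkcond /=.
apply: ler_sum => x _.
case: (asboolP (P x)) => Px; first by rewrite (asboolT (PQ x Px)).
by case: ifP.
Qed.

Lemma msum_ext L d P Q : (forall x, P x <-> Q x) -> msum L d P = msum L d Q.
Proof.
move=> PQ; apply: eq_bigl => x.
by apply/asboolP/asboolP => /PQ.
Qed.

Lemma msum_supp L d U : (forall x, 0 <= d x) ->
  msum L d (fun y => U y /\ supp d y) = msum L d U.
Proof.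
move=> d0; rewrite /msum big_mkcond [RHS]big_mkcond /=.
apply: eq_bigr => x _.
case: (asboolP (U x)) => Ux.
- case: (asboolP (U x /\ supp d x)) => // H /=.
  apply/esym/eqP; rewrite eq_le d0 andbT leNgt; apply/negP => dp.
  by apply: H.
- by case: (asboolP (U x /\ supp d x)) => // -[].
Qed.

Lemma msum_pos L d P : (forall x, 0 <= d x) -> 0 < msum L d P ->
  exists x, [/\ x \in L, P x & 0 < d x].
Proof.
move=> d0 pos.
case: (boolP (has (fun x => `[< P x >] && (0 < d x)) L)).
  by move=> /hasP[x xL /andP[/asboolP Px dx]]; exists x.
move=> /hasPn H; exfalso; move: pos.
rewrite /msum big_seq_cond big1 ?ltxx // => x /andP[xL Px].
have := H x xL; rewrite Px /= => dx.
by apply/eqP; rewrite eq_le d0 andbT leNgt.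
Qed.

Lemma msum_term L d P x : uniq L -> (forall x, 0 <= d x) -> x \in L -> P x ->
  d x <= msum L d P.
Proof.
move=> uL d0 xL Px; rewrite /msum big_mkcond (bigD1_seq x) //= (asboolT Px).
rewrite lerDl; apply: sumr_ge0 => i _; by case: ifP.
Qed.

(* additivity over saturated sets, via a double sum *)
Variable R : A -> A -> Prop.
Hypothesis Rrefl : forall x, R x x.
Hypothesis Rsym : forall x y, R x y -> R y x.
Hypothesis Rtrans : forall x y z, R x y -> R y z -> R x z.

Lemma msum_dbl L d1 d2 (w : A -> rat) U : uniq L ->
  (forall x, 0 <= d1 x) -> (forall x, 0 <= d2 x) ->
  (forall x, w x = msum L d1 (R x)) -> (forall x, w x = msum L d2 (R x)) ->
  msum L d1 U = \sum_(x <- L) \sum_(y <- L)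
     (if `[< U x /\ R x y >] then d1 x * d2 y / w x else 0).
Proof.
move=> uL p1 p2 w1 w2.
rewrite /msum big_mkcond /=; apply: eq_big_seq => x xL.
case: (asboolP (U x)) => Ux; last first.
  by rewrite big1 // => y _; case: (asboolP (U x /\ R x y)) => // -[].
have -> : \sum_(y <- L) (if `[< U x /\ R x y >] then d1 x * d2 y / w x else 0)
   = d1 x * (msum L d2 (R x)) / w x.
  rewrite /msum [in RHS]big_mkcond mulr_sumr mulr_suml; apply: eq_bigr => y _.
  case: (asboolP (U x /\ R x y)) => [[_ rxy]|H].
    by rewrite (asboolT rxy).
  case: (asboolP (R x y)) => rxy; first by exfalso; apply: H.
  by rewrite mulr0 mul0r.
rewrite -w2.
have [wx0|wn0] := eqVneq (w x) 0.
  have : d1 x <= w x by rewrite w1; exact: msum_term.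
  rewrite wx0 => h; have -> : d1 x = 0 by apply/eqP; rewrite eq_le h p1.
  by rewrite !mul0r.
by rewrite mulfK.
Qed.

Hypothesis dummy : True.
Lemma msum_sat L d1 d2 U : uniq L ->
  (forall x, 0 <= d1 x) -> (forall x, 0 <= d2 x) ->
  (forall x, msum L d1 (R x) = msum L d2 (R x)) ->
  (forall x y, U x -> R x y -> U y) ->
  msum L d1 U = msum L d2 U.
Proof.
move=> uL p1 p2 e Usat.
pose w x := msum L d1 (R x).
have w2 : forall x, w x = msum L d2 (R x) by move=> x; rewrite /w e.
rewrite (@msum_dbl L d1 d2 w) // (@msum_dbl L d2 d1 w) //.
rewrite exchange_big /=; apply: eq_bigr => x _; apply: eq_bigr => y _.
case: (asboolP (U x /\ R x y)) => [[ux rxy]|H].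
  rewrite asboolT; last by split; [apply: Usat ux rxy | apply: Rsym].
  have -> : w x = w y.
    by apply: msum_ext => z; split; [apply: Rtrans; apply: Rsym | apply: Rtrans].
  by rewrite [d1 y * _]mulrC.
case: (asboolP (U y /\ R y x)) => // -[uy ryx].
by exfalso; apply: H; split; [apply: Usat uy ryx | apply: Rsym].
Qed.
End Sums.

Lemma dequiv_sym (A : eqType) (R : A -> A -> Prop) d d' :
  dequiv R d d' -> dequiv R d' d.
Proof. by move=> e x0 r; apply: iff_sym. Qed.

Lemma dequiv_trans (A : eqType) (R : A -> A -> Prop) d d' d'' :
  dequiv R d d' -> dequiv R d' d'' -> dequiv R d d''.
Proof. by move=> e1 e2 x0 r; apply: iff_trans (e1 x0 r) (e2 x0 r). Qed.

Lemma lapprox_sym (X B : Type) (step : X -> B -> X -> Prop) k x y :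
  lapprox step k x y -> lapprox step k y x.
Proof.
elim: k x y => //= k IH x y [H1 H2]; split.
- by move=> b y' st; have [x' [st' l]] := H2 b y' st; exists x'; split => //; apply: IH.
- by move=> b x' st; have [y' [st' l]] := H1 b x' st; exists y'; split => //; apply: IH.
Qed.

Section Main.
Variables (S : countType) (Sig : finType) (tr : S -> Sig -> (S -> rat) -> Prop).
Hypothesis HL : is_pLTS tr.
Hypothesis Hfin : forall d : S -> rat, rel_distr tr d ->
              exists s : seq S, forall x, supp d x -> x \in s.

Lemma papprox_refl n s : papprox tr n s s.
Proof. case: n => //= m; split => a d h; exists d; split => // x0 r; done. Qed.

Lemma papprox_sym n s t : papprox tr n s t -> papprox tr n t s.
Proof.
case: n => //= m [H1 H2]; split.
- move=> a d h; have [d' [h' e]] := H2 a d h; exists d'; split => //.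
  exact: dequiv_sym.
- move=> a d h; have [d' [h' e]] := H1 a d h; exists d'; split => //.
  exact: dequiv_sym.
Qed.

Lemma papprox_trans n s t u : papprox tr n s t -> papprox tr n t u ->
  papprox tr n s u.
Proof.
case: n => //= m [A1 A2] [B1 B2]; split.
- move=> a d h; have [d' [h' e]] := A1 a d h; have [d'' [h'' e']] := B1 a d' h'.
  by exists d''; split => //; apply: dequiv_trans e e'.
- move=> a d h; have [d' [h' e]] := B2 a d h; have [d'' [h'' e']] := A2 a d' h'.
  by exists d''; split => //; apply: dequiv_trans e' e.
Qed.

Lemma rel_nonneg d : rel_distr tr d -> forall x, 0 <= d x.
Proof.
move=> [s [a h]] x; have [H _] := HL.1 s a d h.
by case/andP: (H x).
Qed.

Lemma two_list d1 d2 : rel_distr tr d1 -> rel_distr tr d2 ->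
  exists L : seq S, [/\ uniq L, (forall x, 0 < d1 x -> x \in L) &
                      (forall x, 0 < d2 x -> x \in L)].
Proof.
move=> h1 h2; have [s1 H1] := Hfin h1; have [s2 H2] := Hfin h2.
exists (undup (s1 ++ s2)); split; first exact: undup_uniq.
- by move=> x /H1 xs; rewrite mem_undup mem_cat xs.
- by move=> x /H2 xs; rewrite mem_undup mem_cat xs orbT.
Qed.

Definition P0 n := forall s t (h1 : lstate_ok tr (LS s)) (h2 : lstate_ok tr (LS t)),
  papprox tr n s t <->
  lapprox (@lstep S Sig tr) (3 * n)%N (exist _ (LS s) h1) (exist _ (LS t) h2).

Definition Pi n := forall (d1 d2 : S -> rat) (h1 : rel_distr tr d1) (h2 : rel_distr tr d2),
      dequiv (papprox tr n) d1 d2 <->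
      lapprox (@lstep S Sig tr) (3 * n + 2)%N
        (exist _ (LD d1) h1) (exist _ (LD d2) h2).

Definition Pii n := forall (T1 T2 : S -> Prop) (h1 : rel_set tr T1) (h2 : rel_set tr T2),
      rsimilar (papprox tr n) T1 T2 <->
      lapprox (@lstep S Sig tr) (3 * n + 1)%N
        (exist _ (LT T1) h1) (exist _ (LT T2) h2).

Lemma rsimilar_sym (R : S -> S -> Prop) T1 T2 : rsimilar R T1 T2 -> rsimilar R T2 T1.
Proof. by move=> H x0; apply: iff_sym. Qed.

Lemma ii_of_0 n : P0 n -> Pii n.
Proof.
move=> H0 T1 T2 h1 h2; rewrite addn1 /=; split.
- move=> sim; split.
  + move=> [[a|rho|] okb] [[s|d|T] okx]; rewrite /lstep //= => -[_ T1s].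
    have [|t [T2t Rst]] := (sim s).1; first by exists s; split => //; apply: papprox_refl.
    exists (exist _ (LS t) I); split; first by split.
    by apply/(H0 s t).
  + move=> [[a|rho|] okb] [[t|d|T] okx]; rewrite /lstep //= => -[_ T2t].
    have [|s [T1s Rts]] := (sim t).2; first by exists t; split => //; apply: papprox_refl.
    exists (exist _ (LS s) I); split; first by split.
    by apply/(H0 s t); apply: papprox_sym.
- move=> [A1 A2] x0; split.
  + move=> [x [T1x Rx0x]].
    have [[[t|d|T] oky] [st lap]] := A1 (exist (lact_ok tr) (@LH Sig) I) (exist _ (LS x) I) (conj h1 T1x) => //.
    case: st => _ T2t; exists t; split => //.
    by apply: papprox_trans Rx0x _; apply/(H0 x t I oky).
  + move=> [t [T2t Rx0t]].
    have [[[x|d|T] oky] [st lap]] := A2 (exist (lact_ok tr) (@LH Sig) I) (exist _ (LS t) I) (conj h2 T2t) => //.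
    case: st => _ T1x; exists x; split => //.
    by apply: papprox_trans Rx0t _; apply: papprox_sym; apply/(H0 x t oky I).
Qed.


Lemma zero_succ n : Pi n -> P0 n.+1.
Proof.
move=> Hi s t h1 h2.
have -> : (3 * n.+1 = (3 * n + 2).+1)%N by lia.
rewrite /=; split.
- move=> [A1 A2]; split.
  + move=> [[a|rho|] okb] [[s'|d|T] okx]; rewrite /lstep //= => st.
    have [d' [h' e]] := A1 a d st.
    have okd' : lstate_ok tr (LD d') by exists t, a.
    exists (exist _ (LD d') okd'); split => //.
    by apply/(Hi d d' okx okd').
  + move=> [[a|rho|] okb] [[s'|d|T] okx]; rewrite /lstep //= => st.
    have [d' [h' e]] := A2 a d st.
    have okd' : lstate_ok tr (LD d') by exists s, a.
    exists (exist _ (LD d') okd'); split => //.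
    by apply/(Hi d' d okd' okx).
- move=> [B1 B2]; split.
  + move=> a d st.
    have okd : lstate_ok tr (LD d) by exists s, a.
    have [[[u|d'|T] oky] [st2 lap]] := B1 (exist (lact_ok tr) (LA a) I) (exist _ (LD d) okd) st => //.
    by exists d'; split => //; apply/(Hi d d' okd oky).
  + move=> a d st.
    have okd : lstate_ok tr (LD d) by exists t, a.
    have [[[u|d'|T] oky] [st2 lap]] := B2 (exist (lact_ok tr) (LA a) I) (exist _ (LD d) okd) st => //.
    by exists d'; split => //; apply/(Hi d' d oky okd).
Qed.


Lemma dequiv_msum (R : S -> S -> Prop) L d1 d2 : uniq L ->
  (forall x, 0 <= d1 x) -> (forall x, 0 <= d2 x) ->
  (forall x, 0 < d1 x -> x \in L) -> (forall x, 0 < d2 x -> x \in L) ->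
  (dequiv R d1 d2 <-> forall x0, msum L d1 (R x0) = msum L d2 (R x0)).
Proof.
move=> uL p1 p2 s1 s2; split.
- move=> e x0; apply: (@sum_on_uniq _ (R x0) d2).
  + by apply/(e x0); apply: sum_on_msum.
  + exact: sum_on_msum.
- move=> e x0 r; split => H.
  + rewrite (sum_on_uniq H (sum_on_msum (R x0) uL p1 s1)) e.
    exact: sum_on_msum.
  + rewrite (sum_on_uniq H (sum_on_msum (R x0) uL p2 s2)) -e.
    exact: sum_on_msum.
Qed.

Lemma i_fwd n (Hii : Pii n) d1 d2 (h1 : rel_distr tr d1) (h2 : rel_distr tr d2) :
  dequiv (papprox tr n) d1 d2 -> forall b x',
  lstep (exist _ (LD d1) h1) b x' -> exists y',
  lstep (exist _ (LD d2) h2) b y' /\ lapprox (@lstep S Sig tr) (3 * n + 1)%N x' y'.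
Proof.
move=> e [[a|rho|] okb] [[s|d|T1] okx]; rewrite /lstep //= => -[_ okr T1sub [r [sr le]]].
have [L [uL s1 s2]] := two_list h1 h2.
have p1 := rel_nonneg h1; have p2 := rel_nonneg h2.
set R := papprox tr n.
have E := (dequiv_msum R uL p1 p2 s1 s2).1 e.
have Rrefl : forall x, R x x by move=> x; apply: papprox_refl.
have Rsym : forall x y, R x y -> R y x by move=> x y; apply: papprox_sym.
have Rtr : forall x y z, R x y -> R y z -> R x z by move=> x y z; apply: papprox_trans.
have cls : forall x, T1 x -> exists y, R x y /\ supp d2 y.
  move=> x T1x.
  have dx : 0 < d1 x := T1sub x T1x.
  have : 0 < msum L d2 (R x).
    rewrite -E; apply: lt_le_trans dx _; apply: msum_term => //.
    exact: s1 (T1sub x T1x).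
  by move=> /(msum_pos p2)[y [_ Rxy dy]]; exists y.
pose U y := exists x, T1 x /\ R x y.
pose T2 y := U y /\ supp d2 y.
have sim : rsimilar R T1 T2.
  move=> x0; split.
  - move=> [x [T1x Rx0x]]; have [y [Rxy dy]] := cls x T1x.
    exists y; split; last exact: Rtr Rx0x Rxy.
    by rewrite /T2 /U; split => //; exists x.
  - move=> [y [[[x [T1x Rxy]] _] Rx0y]]; exists x; split => //.
    by apply: Rtr Rx0y _; apply: Rsym.
have okT2 : rel_set tr T2.
  split; last by exists d2; split => // y [].
  case: okx => [[x T1x] _]; have [y [Rxy dy]] := cls x T1x.
  by exists y; split => //; exists x.
exists (exist _ (LT T2) okT2); split; last by apply/(Hii T1 T2 okx okT2).
rewrite /lstep /=; split => //; first by move=> y [].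
exists (msum L d2 T2); split; first exact: sum_on_msum.
rewrite (sum_on_uniq sr (sum_on_msum T1 uL p1 s1)) in le.
apply: (le_trans le).
apply: (@le_trans _ _ (msum L d1 U)).
  by apply: msum_mono => // x T1x; exists x; split.
rewrite (@msum_sat _ R Rrefl Rsym Rtr L d1 d2 U) //.
  by rewrite /T2 msum_supp.
by move=> x y [z [T1z Rzx]] Rxy; exists z; split => //; apply: Rtr Rzx Rxy.
Qed.


Lemma i_le n (Hii : Pii n) d1 d2 (h1 : rel_distr tr d1) (h2 : rel_distr tr d2) L :
  uniq L -> (forall x, 0 < d1 x -> x \in L) -> (forall x, 0 < d2 x -> x \in L) ->
  (forall b x', lstep (exist _ (LD d1) h1) b x' -> exists y',
     lstep (exist _ (LD d2) h2) b y' /\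
     (lapprox (@lstep S Sig tr) (3 * n + 1)%N x' y' \/
      lapprox (@lstep S Sig tr) (3 * n + 1)%N y' x')) ->
  forall x0, msum L d1 (papprox tr n x0) <= msum L d2 (papprox tr n x0).
Proof.
move=> uL s1 s2 H x0.
have p1 := rel_nonneg h1; have p2 := rel_nonneg h2.
set R := papprox tr n.
have Rrefl : forall x, R x x by move=> x; apply: papprox_refl.
have Rsym : forall x y, R x y -> R y x by move=> x y; apply: papprox_sym.
have Rtr : forall x y z, R x y -> R y z -> R x z by move=> x y z; apply: papprox_trans.
have [le0|gt0] := lerP (msum L d1 (R x0)) 0.
  by apply: le_trans le0 _; apply: msum_ge0.
have [x [xL Ex dx]] := msum_pos p1 gt0.
pose T1 y := R x0 y /\ supp d1 y.
have okT1 : rel_set tr T1 by split; [exists x | exists d1; split => // y []].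
pose rho := msum L d1 T1.
have okr : rel_num tr rho.
  exists d1, T1; split => //; [by exists x | by move=> y [] | exact: sum_on_msum].
have st : lstep (exist _ (LD d1) h1) (exist (lact_ok tr) (LN Sig rho) okr)
              (exist _ (LT T1) okT1).
  rewrite /lstep /=; split => //; first by move=> y [].
  by exists rho; split => //; exact: sum_on_msum.
have [[[u|d'|T2] oky] [st2 lap]] := H _ _ st => //.
move: st2; rewrite /lstep /= => -[_ _ T2sub [r2 [sr2 le2]]].
have sim : rsimilar R T1 T2.
  case: lap => lap; first by apply/(Hii T1 T2 okT1 oky).
  by apply: rsimilar_sym; apply/(Hii T2 T1 oky okT1).
have T2E : forall y, T2 y -> R x0 y.
  move=> y T2y; have [|z [[Rx0z _] Ryz]] := (sim y).2; first by exists y.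
  by apply: Rtr Rx0z _; apply: Rsym.
rewrite -(msum_supp _ (R x0) p1) -/T1 -/rho.
apply: (le_trans le2).
rewrite (sum_on_uniq sr2 (sum_on_msum T2 uL p2 s2)).
exact: msum_mono.
Qed.

Lemma i_of_ii n : Pii n -> Pi n.
Proof.
move=> Hii d1 d2 h1 h2.
have -> : (3 * n + 2 = (3 * n + 1).+1)%N by lia.
have [L [uL s1 s2]] := two_list h1 h2.
have p1 := rel_nonneg h1; have p2 := rel_nonneg h2.
rewrite (dequiv_msum _ uL p1 p2 s1 s2) /=; split.
- move=> E.
  have e : dequiv (papprox tr n) d1 d2 by apply/(dequiv_msum _ uL p1 p2 s1 s2).
  split; first exact: i_fwd.
  move=> b y' st.
  have [x' [st' lap]] := i_fwd Hii h1 (dequiv_sym e) st.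
  by exists x'; split => //; apply: lapprox_sym.
- move=> [A1 A2] x0; apply/eqP; rewrite eq_le; apply/andP; split.
  + apply: (i_le Hii (h1:=h1) (h2:=h2)) => // b x' st.
    by have [y' [st' lap]] := A1 b x' st; exists y'; split => //; left.
  + apply: (i_le Hii (h1:=h2) (h2:=h1)) => // b x' st.
    by have [y' [st' lap]] := A2 b x' st; exists y'; split => //; right.
Qed.

Lemma all_P0 n : P0 n.
Proof.
elim: n => [|n IH]; first by move=> s t h1 h2; rewrite muln0.
exact/zero_succ/i_of_ii/ii_of_0.
Qed.

End Main.

Theorem mainTheorem2 (S : countType) (Sig : finType)
    (tr : S -> Sig -> (S -> rat) -> Prop)
    (HL : is_pLTS tr)
    (Hfin : forall d : S -> rat, rel_distr tr d ->
              exists s : seq S, forall x, supp d x -> x \in s)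
    (n : nat) :
  (forall (d1 d2 : S -> rat) (h1 : rel_distr tr d1) (h2 : rel_distr tr d2),
      dequiv (papprox tr n) d1 d2 <->
      lapprox (@lstep S Sig tr) (3 * n + 2)%N
        (exist _ (LD d1) h1) (exist _ (LD d2) h2)) /\
  (forall (T1 T2 : S -> Prop) (h1 : rel_set tr T1) (h2 : rel_set tr T2),
      rsimilar (papprox tr n) T1 T2 <->
      lapprox (@lstep S Sig tr) (3 * n + 1)%N
        (exist _ (LT T1) h1) (exist _ (LT T2) h2)).
Proof.
have H0 := all_P0 HL Hfin n.
have Hii := ii_of_0 H0.
split; [exact: (i_of_ii HL Hfin Hii) | exact: Hii].
Qed.
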